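(* For every integer $k\ge 1$, every vertex of every graph $G$ with $\mathrm{adim}(G)=k$ has degree at most $k+2^k-1$. Moreover, there exists a graph $G$ with $\mathrm{adim}(G)=k$ having a vertex of degree exactly $k+2^k-1$.
   Context: $d(x,y)$ is the length of a shortest $x$–$y$ path, with $d(x,y)=\infty$ if $x,y$ lie in different components. Let $d_1(x,y)=\min\{d(x,y),2\}$. A set $A\subseteq V(G)$ is an adjacency resolving set if for all distinct $x,y\in V(G)$ there is $z\in A$ with $d_1(x,z)\ne d_1(y,z)$. The adjacency dimension $\mathrm{adim}(G)$ is the minimum size of an adjacency resolving set. *)

(* Defs.v *)
From mathcomp Require Import all_boot all_order.
Set Implicit Arguments. Unset Strict Implicit. Unset Printing Implicit Defensive.

Definition simple_graph (T : finType) (e : rel T) : Prop :=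
  symmetric e /\ irreflexive e.

(* d_1(x,y) = min{d(x,y), 2}: 0 if x = y, 1 if x,y adjacent, 2 otherwise
   (including different components, where d = infinity). *)
Definition adist (T : finType) (e : rel T) (x y : T) : nat :=
  if x == y then 0 else if e x y then 1 else 2.

Definition adj_resolving (T : finType) (e : rel T) (A : {set T}) : bool :=
  [forall x : T, forall y : T,
     (x != y) ==> [exists z in A, adist e x z != adist e y z]].

(* adim(G): minimum size of an adjacency resolving set (V(G) itself always
   resolves, so #|T| is a valid default). *)
Definition adim (T : finType) (e : rel T) : nat :=
  \big[minn/#|T|]_(A : {set T} | adj_resolving e A) #|A|.

Definition degree (T : finType) (e : rel T) (x : T) : nat :=
  #|[set y | e x y]|.

(* Main.v *)
Require Import Defs.
From mathcomp Require Import all_boot all_order.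
From mathcomp Require Import zify.

Set Implicit Arguments. Unset Strict Implicit. Unset Printing Implicit Defensive.

Lemma adist_self (T : finType) (e : rel T) x : adist e x x = 0.
Proof. by rewrite /adist eqxx. Qed.

Lemma adist_neq (T : finType) (e : rel T) x y : x != y ->
  adist e x y = if e x y then 1 else 2.
Proof. by rewrite /adist => /negbTE ->. Qed.

Lemma resolving_inj (T : finType) (e : rel T) (A : {set T}) :
  adj_resolving e A ->
  {in ~: A &, injective (fun u => [set z in A | e u z])}.
Proof.
move=> HA u v uA vA Huv; apply/eqP; apply/negPn/negP => neq.
move: HA => /forallP/(_ u)/forallP/(_ v)/implyP/(_ neq)/exists_inP [z zA].
have uz : u != z by apply/eqP => E; move: uA; rewrite inE E zA.
have vz : v != z by apply/eqP => E; move: vA; rewrite inE E zA.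
rewrite !adist_neq //.
have : (z \in [set z in A | e u z]) = (z \in [set z in A | e v z]) by rewrite Huv.
by rewrite !inE zA /= => ->; rewrite eqxx.
Qed.

Lemma resolving_card (T : finType) (e : rel T) (A : {set T}) :
  adj_resolving e A -> #|~: A| <= 2 ^ #|A|.
Proof.
move=> HA; rewrite -(card_in_imset (resolving_inj HA)) -card_powerset.
apply: subset_leq_card; apply/subsetP => S /imsetP [u _ ->].
by rewrite powersetE; apply/subsetP => z; rewrite inE => /andP [].
Qed.

Lemma setT_resolving (T : finType) (e : rel T) : adj_resolving e setT.
Proof.
apply/forallP => x; apply/forallP => y; apply/implyP => xy.
apply/exists_inP; exists x; first by rewrite inE.
by rewrite adist_self adist_neq 1?eq_sym //; case: (e y x).
Qed.

Lemma adim_cases (T : finType) (e : rel T) :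
  adim e = #|T| \/ exists A, adj_resolving e A /\ adim e = #|A|.
Proof.
pose Q m := (m = #|T|) \/ exists A, adj_resolving e A /\ m = #|A|.
rewrite /adim; apply: (big_ind Q); first by left.
- by move=> a b Ha Hb; rewrite /minn; case: ifP.
- by move=> A HA; right; exists A.
Qed.

Lemma adim_le (T : finType) (e : rel T) A : adj_resolving e A -> adim e <= #|A|.
Proof.
move=> HA; rewrite /adim.
have : A \in index_enum {set T} by rewrite mem_index_enum.
elim: (index_enum _) => [|B s IH] //; rewrite inE big_cons.
case/orP => [/eqP <-|As]; first by rewrite HA geq_minl.
case: ifP => _; last exact: IH.
by rewrite geq_min IH ?orbT.
Qed.

Lemma adim_ge (T : finType) (e : rel T) k :
  k <= #|T| -> (forall A, adj_resolving e A -> k <= #|A|) -> k <= adim e.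
Proof.
move=> HT HA; rewrite /adim; apply: (big_ind (fun m => k <= m)) => //.
by move=> a b Ha Hb; rewrite leq_min Ha Hb.
Qed.

Lemma upper (k : nat) (T : finType) (e : rel T) : simple_graph e -> adim e = k ->
     forall x : T, degree e x <= k + 2 ^ k - 1.
Proof.
move=> [sym irr] Hk x.
have Nx : x \notin [set y | e x y] by rewrite inE irr.
have degT : degree e x <= #|T| - 1.
  rewrite /degree; have : [set y | e x y] \subset [set~ x].
    by apply/subsetP => y; rewrite !inE; apply: contraTneq => ->; rewrite irr.
  move/subset_leq_card; rewrite cardsC1; lia.
case: (adim_cases e) => [E|[A [HA E]]].
  apply: (leq_trans degT); have : 0 < 2 ^ k by rewrite expn_gt0.
  move: Hk; rewrite E => ->; lia.
rewrite -Hk E /degree.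
set N := [set y | e x y].
have sub : N \subset (N :&: A) :|: (N :\: A).
  by apply/subsetP => y yN; rewrite in_setU in_setI in_setD yN; case: (y \in A).
apply: (leq_trans (subset_leq_card sub)); apply: (leq_trans (leq_card_setU _ _)).
have inj := resolving_inj HA.
pose f u := [set z in A | e u z].
have Hf : #|N :\: A| = #|f @: (N :\: A)|.
  rewrite card_in_imset //; move=> u v; rewrite !inE => /andP [uA _] /andP [vA _].
  by apply: inj; rewrite inE.
have Hsub : f @: (N :\: A) \subset powerset A.
  by apply/subsetP => S /imsetP [u _ ->]; rewrite powersetE; apply/subsetP => z; rewrite inE => /andP [].
have HA2 : #|N :\: A| <= 2 ^ #|A| by rewrite Hf -card_powerset subset_leq_card.
have pos : 0 < 2 ^ #|A| by rewrite expn_gt0.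
case xA: (x \in A).
- have : N :&: A \subset A :\ x.
    apply/subsetP => y; rewrite !inE => /andP [xy ->]; rewrite andbT.
    by apply/eqP => E'; move: xy; rewrite E' irr.
  move=> /subset_leq_card => H1; have := cardsD1 x A; rewrite xA /= => H3; lia.
- have H1 : #|N :&: A| <= #|A| by rewrite subset_leq_card // subsetIr.
  have H2 : #|N :\: A| < 2 ^ #|A|.
    rewrite Hf -card_powerset; apply: proper_card; apply/properP; split => //.
    exists (f x); first by rewrite powersetE; apply/subsetP => z; rewrite inE => /andP [].
    apply/imsetP => [[u uN Eu]]; have : u = x.
      apply: inj; last exact: (esym Eu).
        by move: uN; rewrite !inE => /andP [].
      by rewrite inE xA.
    by move=> Eux; move: uN; rewrite Eux in_setD => /andP [_ xN]; move: Nx; rewrite -/N xN.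
  lia.
Qed.

Section Constr.
Variable k : nat.
Local Notation VT := ('I_k + {set 'I_k})%type.
Definition ce (u v : VT) : bool :=
  match u, v with
  | inl _, inl _ => false
  | inl i, inr X => i \in X
  | inr X, inl i => i \in X
  | inr X, inr Y => (X != Y) && ((X == setT) || (Y == setT))
  end.

Lemma ce_simple : simple_graph ce.
Proof.
split.
- by case=> [i|X] [j|Y] //=; rewrite eq_sym; case: (X == setT); case: (Y == setT);
     rewrite ?orbT ?orbF.
- by case=> [i|X] //=; rewrite eqxx.
Qed.

Lemma card_VT : #|{: VT}| = k + 2 ^ k.
Proof.
rewrite card_sum card_ord; congr (_ + _).
have -> : #|{: {set 'I_k}}| = #|powerset [set: 'I_k]|.
  by apply: eq_card => X; rewrite powersetE subsetT.
by rewrite card_powerset cardsT card_ord.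
Qed.

Definition Aset : {set VT} := [set u : VT | if u is inl _ then true else false].

Lemma Aset_card : #|Aset| <= k.
Proof.
have : Aset \subset inl @: [set: 'I_k].
  apply/subsetP => [[i|X]]; rewrite inE // => _; apply/imsetP; exists i => //; exact: in_setT.
move/subset_leq_card => H; apply: (leq_trans H); apply: (leq_trans (leq_imset_card _ _)).
by rewrite cardsT card_ord.
Qed.

Lemma Aset_res : adj_resolving ce Aset.
Proof.
apply/forallP => x; apply/forallP => y; apply/implyP => xy.
case: x xy => [i|X] xy.
  apply/exists_inP; exists (inl i); first by rewrite inE.
  by rewrite adist_self adist_neq 1?eq_sym //; case: (ce y _).
case: y xy => [j|Y] xy.
  apply/exists_inP; exists (inl j); first by rewrite inE.
  by rewrite adist_self adist_neq //; case: (ce _ _).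
have : X != Y by apply: contraNneq xy => ->.
case/boolP: [exists i, (i \in X) != (i \in Y)] => [/existsP [i Hi] _|].
  apply/exists_inP; exists (inl i); first by rewrite inE.
  by rewrite !adist_neq //=; move: Hi; case: (i \in X); case: (i \in Y).
move/existsPn => H /eqP []; apply/setP => i; exact/eqP/negPn/H.
Qed.

Lemma ce_adim : adim ce = k.
Proof.
apply/eqP; rewrite eqn_leq; apply/andP; split.
  exact: leq_trans (adim_le Aset_res) Aset_card.
apply: adim_ge; first by rewrite card_VT leq_addr.
move=> B HB; have := resolving_card HB; have := cardsC B; rewrite card_VT.
case: (leqP k #|B|) => // lt H1 H2.
have : 2 ^ #|B| <= 2 ^ k by rewrite leq_pexp2l // ltnW.
lia.
Qed.

Lemma ce_deg : degree ce (inr setT) = k + 2 ^ k - 1.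
Proof.
rewrite /degree.
have -> : [set y : VT | ce (inr setT) y] = [set~ (inr setT : VT)].
  apply/setP => [[i|X]]; rewrite !inE /= ?in_setT //.
  rewrite eqxx orTb andbT eq_sym; apply/idP/idP; apply: contra; [by move=> /eqP [->] | by move=> /eqP ->].
by rewrite cardsC1 card_VT; lia.
Qed.
End Constr.

Theorem corollary3p6 (k : nat) : 1 <= k ->
  (forall (T : finType) (e : rel T), simple_graph e -> adim e = k ->
     forall x : T, degree e x <= k + 2 ^ k - 1)
  /\
  (exists (T : finType) (e : rel T), simple_graph e /\ adim e = k /\
     exists x : T, degree e x = k + 2 ^ k - 1).
Proof.
move=> _; split; first exact: upper.
exists ('I_k + {set 'I_k})%type, (@ce k); split; first exact: ce_simple.
split; first exact: ce_adim.
by exists (inr setT); exact: ce_deg.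
Qed.
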